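(* Let $f:\mathbb{R}^n\to\mathbb{R}^m$, $F:\mathbb{R}^n\rightrightarrows\mathbb{R}^m$, $\bar x\in\mathbb{R}^n$ and $\bar v\in(f+F)(\bar x)$. Assume $f$ is calm at $\bar x$: there exist $\ell>0$ and a neighborhood $U$ of $\bar x$ with $\|f(x)-f(\bar x)\|\le\ell\|x-\bar x\|$ for all $x\in U$. Then $$\widehat D^*f(\bar x)(w)+\widehat D^*F\big(\bar x,\bar v-f(\bar x)\big)(w)\subset\widehat D^*(f+F)(\bar x,\bar v)(w)\quad\text{for all }w\in\mathbb{R}^m.$$ If in addition $f$ is Fréchet differentiable at $\bar x$, this inclusion holds as an equality.
   Context: Regular normal cone: $\widehat N_\Omega(\bar z):=\{v:\limsup_{z\to\bar z,\,z\in\Omega}\frac{\langle v,z-\bar z\rangle}{\|z-\bar z\|}\le0\}$. Regular coderivative of $F:\mathbb{R}^n\rightrightarrows\mathbb{R}^m$ at $(\bar x,\bar y)\in\operatorname{gph}F$: $\widehat D^*F(\bar x,\bar y)(w):=\{v:(v,-w)\in\widehat N_{\operatorname{gph}F}(\bar x,\bar y)\}$; for single-valued $f$, $\widehat D^*f(\bar x):=\widehat D^*f(\bar x,f(\bar x))$. $(f+F)(x):=f(x)+F(x)$. *)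

(* Defs.v *)
From HB Require Import structures.
From mathcomp Require Import all_boot all_order all_algebra.
From mathcomp Require Import all_classical all_reals all_analysis.
Set Implicit Arguments. Unset Strict Implicit. Unset Printing Implicit Defensive.
Import Order.TTheory GRing.Theory Num.Theory.
Import numFieldNormedType.Exports.
Local Open Scope classical_set_scope.
Local Open Scope ring_scope.

Definition dotv (R : realType) (k : nat) (v z : 'rV[R]_k) : R :=
  \sum_(i < k) v 0 i * z 0 i.
Definition enorm (R : realType) (k : nat) (z : 'rV[R]_k) : R :=
  Num.sqrt (\sum_(i < k) z 0 i ^+ 2).

(* Regular (Fréchet) normal cone: v such that
   limsup_{z -> zb, z in Om} <v, z - zb> / ||z - zb|| <= 0,
   written out in epsilon-delta form (z ranges over Om \ {zb}). *)
Definition rnormal (R : realType) (k : nat) (Om : set 'rV[R]_k) (zb : 'rV[R]_k)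
  : set 'rV[R]_k :=
  [set v | forall eps : R, 0 < eps -> exists2 del : R, 0 < del &
     forall z, Om z -> 0 < enorm (z - zb) < del ->
       dotv v (z - zb) <= eps * enorm (z - zb)].

Definition gph (R : realType) (n m : nat) (F : 'rV[R]_n -> set 'rV[R]_m)
  : set 'rV[R]_(n + m) :=
  [set z | exists x y, F x y /\ z = row_mx x y].

Definition rcoder (R : realType) (n m : nat) (F : 'rV[R]_n -> set 'rV[R]_m)
  (xb : 'rV[R]_n) (yb : 'rV[R]_m) (w : 'rV[R]_m) : set 'rV[R]_n :=
  [set v | rnormal (gph F) (row_mx xb yb) (row_mx v (- w))].

Definition sv (R : realType) (n m : nat) (f : 'rV[R]_n -> 'rV[R]_m)
  : 'rV[R]_n -> set 'rV[R]_m := fun x => [set f x].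

Definition rcoder_fun (R : realType) (n m : nat) (f : 'rV[R]_n -> 'rV[R]_m)
  (xb : 'rV[R]_n) (w : 'rV[R]_m) : set 'rV[R]_n :=
  rcoder (sv f) xb (f xb) w.

Definition fplusF (R : realType) (n m : nat) (f : 'rV[R]_n -> 'rV[R]_m)
  (F : 'rV[R]_n -> set 'rV[R]_m) : 'rV[R]_n -> set 'rV[R]_m :=
  fun x => [set f x + y | y in F x].

Definition setsumv (R : realType) (k : nat) (A B : set 'rV[R]_k) : set 'rV[R]_k :=
  [set a + b | a in A & b in B].

(* Main.v *)
Require Import Defs.
From HB Require Import structures.
From mathcomp Require Import all_boot all_order all_algebra.
From mathcomp Require Import all_classical all_reals all_analysis.
From mathcomp Require Import ring lra.
Import Order.TTheory GRing.Theory Num.Theory.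
Import numFieldNormedType.Exports.
Local Open Scope classical_set_scope.
Local Open Scope ring_scope.

Set Implicit Arguments. Unset Strict Implicit.
Section Aux.
Variable R : realType.

Definition N1 (k : nat) (z : 'rV[R]_k) : R := \sum_(i < k) `|z 0 i|.

Lemma enorm_ge0 k (z : 'rV[R]_k) : 0 <= enorm z.
Proof. exact: sqrtr_ge0. Qed.

Lemma N1_ge0 k (z : 'rV[R]_k) : 0 <= N1 z.
Proof. by apply: sumr_ge0 => i _. Qed.

Lemma coord_le_enorm k (z : 'rV[R]_k) i : `|z 0 i| <= enorm z.
Proof.
rewrite -sqrtr_sqr /enorm ler_sqrt; last by apply: sumr_ge0 => j _; exact: sqr_ge0.
rewrite (bigD1 i) //= lerDl; apply: sumr_ge0 => j _; exact: sqr_ge0.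
Qed.

Lemma coord_le_N1 k (z : 'rV[R]_k) i : `|z 0 i| <= N1 z.
Proof.
rewrite /N1 (bigD1 i) //= lerDl; apply: sumr_ge0 => j _; exact: normr_ge0.
Qed.

Lemma enorm_le_N1 k (z : 'rV[R]_k) : enorm z <= N1 z.
Proof.
rewrite -[X in _ <= X](ger0_norm (N1_ge0 z)) -sqrtr_sqr /enorm ler_sqrt ?sqr_ge0 //.
rewrite expr2 {2}/N1 mulr_sumr.
apply: ler_sum => i _; rewrite -[X in X <= _]ger0_norm ?sqr_ge0 // expr2 normrM mulrC.
by apply: ler_wpM2r => //; exact: coord_le_N1.
Qed.

Lemma N1_le_enorm k (z : 'rV[R]_k) : N1 z <= k%:R * enorm z.
Proof.
rewrite /N1 mulr_natl -[k in _ *+ k]card_ord -sumr_const.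
by apply: ler_sum => i _; exact: coord_le_enorm.
Qed.

Lemma N1D k (a b : 'rV[R]_k) : N1 (a + b) <= N1 a + N1 b.
Proof.
rewrite /N1 -big_split /=; apply: ler_sum => i _; rewrite mxE; exact: ler_normD.
Qed.

Lemma N1N k (a : 'rV[R]_k) : N1 (- a) = N1 a.
Proof. by apply: eq_bigr => i _; rewrite mxE normrN. Qed.

Lemma enormD k (a b : 'rV[R]_k) :
  enorm (a + b) <= k.+1%:R * (enorm a + enorm b).
Proof.
apply: (le_trans (enorm_le_N1 _)); apply: (le_trans (N1D _ _)).
rewrite mulrDr; apply: lerD; apply: (le_trans (N1_le_enorm _));
  apply: ler_wpM2r; rewrite ?enorm_ge0 // ler_nat //.
Qed.

Lemma enormN k (a : 'rV[R]_k) : enorm (- a) = enorm a.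
Proof. by rewrite /enorm; congr Num.sqrt; apply: eq_bigr => i _; rewrite mxE sqrrN. Qed.

Lemma enorm0_eq k (z : 'rV[R]_k) : enorm z <= 0 -> z = 0.
Proof.
move=> h; apply/rowP => i; rewrite mxE; apply/normr0_eq0.
by apply/eqP; rewrite eq_le normr_ge0 andbT (le_trans (coord_le_enorm _ i)).
Qed.

Lemma enorm0 k : enorm (0 : 'rV[R]_k) = 0.
Proof. by rewrite /enorm big1 ?sqrtr0 // => i _; rewrite mxE expr0n. Qed.

Lemma mxnorm_le_enorm k (z : 'rV[R]_k) : `|z| <= enorm z.
Proof.
rewrite [leLHS]/Num.Def.normr/= mx_normrE (bigmax_le _ (enorm_ge0 _)) //= => -[i j] _.
by rewrite [i]ord1; exact: coord_le_enorm.
Qed.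

Lemma coord_le_mxnorm k (z : 'rV[R]_k) i : `|z 0 i| <= `|z|.
Proof.
rewrite [leRHS]/Num.Def.normr/= mx_normrE.
by apply/bigmax_geP; right => /=; exists (0, i).
Qed.

Lemma enorm_le_mxnorm k (z : 'rV[R]_k) : enorm z <= k%:R * `|z|.
Proof.
apply: (le_trans (enorm_le_N1 _)).
rewrite /N1 mulr_natl -[k in _ *+ k]card_ord -sumr_const.
by apply: ler_sum => i _; exact: coord_le_mxnorm.
Qed.


Lemma dotvDl k (a b z : 'rV[R]_k) : dotv (a + b) z = dotv a z + dotv b z.
Proof. by rewrite /dotv -big_split; apply: eq_bigr => i _; rewrite mxE mulrDl. Qed.
Lemma dotvDr k (a b z : 'rV[R]_k) : dotv z (a + b) = dotv z a + dotv z b.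
Proof. by rewrite /dotv -big_split; apply: eq_bigr => i _; rewrite mxE mulrDr. Qed.
Lemma dotvNl k (a z : 'rV[R]_k) : dotv (- a) z = - dotv a z.
Proof. by rewrite /dotv -sumrN; apply: eq_bigr => i _; rewrite mxE mulNr. Qed.
Lemma dotvNr k (a z : 'rV[R]_k) : dotv z (- a) = - dotv z a.
Proof. by rewrite /dotv -sumrN; apply: eq_bigr => i _; rewrite mxE mulrN. Qed.
Lemma dotvBr k (a b z : 'rV[R]_k) : dotv z (a - b) = dotv z a - dotv z b.
Proof. by rewrite dotvDr dotvNr. Qed.
Lemma dotv0r k (z : 'rV[R]_k) : dotv z 0 = 0.
Proof. by rewrite /dotv big1 // => i _; rewrite mxE mulr0. Qed.

Lemma dotv_row_mx k l (a c : 'rV[R]_k) (b d : 'rV[R]_l) :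
  dotv (row_mx a b) (row_mx c d) = dotv a c + dotv b d.
Proof. by rewrite /dotv big_split_ord /=; congr (_ + _); apply: eq_bigr => i _;
  rewrite ?row_mxEl ?row_mxEr. Qed.

Lemma dotv_le k (v z : 'rV[R]_k) : dotv v z <= N1 v * enorm z.
Proof.
rewrite /dotv /N1 mulr_suml; apply: ler_sum => i _.
apply: (le_trans (ler_norm _)); rewrite normrM; apply: ler_wpM2l => //.
exact: coord_le_enorm.
Qed.

Lemma enorm_row_mx k l (a : 'rV[R]_k) (b : 'rV[R]_l) :
  enorm (row_mx a b) = Num.sqrt (\sum_(i < k) a 0 i ^+ 2 + \sum_(i < l) b 0 i ^+ 2).
Proof. by rewrite /enorm big_split_ord /=; congr (Num.sqrt (_ + _)); apply: eq_bigr => i _;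
  rewrite ?row_mxEl ?row_mxEr. Qed.

Lemma enorm_row_mxl k l (a : 'rV[R]_k) (b : 'rV[R]_l) : enorm a <= enorm (row_mx a b).
Proof.
rewrite enorm_row_mx /enorm ler_sqrt; last by apply: addr_ge0; apply: sumr_ge0 => i _; exact: sqr_ge0.
by rewrite lerDl; apply: sumr_ge0 => i _; exact: sqr_ge0.
Qed.
Lemma enorm_row_mxr k l (a : 'rV[R]_k) (b : 'rV[R]_l) : enorm b <= enorm (row_mx a b).
Proof.
rewrite enorm_row_mx /enorm ler_sqrt; last by apply: addr_ge0; apply: sumr_ge0 => i _; exact: sqr_ge0.
by rewrite lerDr; apply: sumr_ge0 => i _; exact: sqr_ge0.
Qed.
Lemma enorm_row_mx_le k l (a : 'rV[R]_k) (b : 'rV[R]_l) :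
  enorm (row_mx a b) <= enorm a + enorm b.
Proof.
rewrite enorm_row_mx.
have ha : 0 <= \sum_(i < k) a 0 i ^+ 2 by apply: sumr_ge0 => i _; exact: sqr_ge0.
have hb : 0 <= \sum_(i < l) b 0 i ^+ 2 by apply: sumr_ge0 => i _; exact: sqr_ge0.
rewrite -[X in _ <= X](ger0_norm (addr_ge0 (enorm_ge0 a) (enorm_ge0 b))) -sqrtr_sqr.
rewrite ler_sqrt ?sqr_ge0 // sqrrD /enorm !sqr_sqrtr //.
rewrite -addrA lerD2l lerDr; apply: mulrn_wge0; apply: mulr_ge0; exact: sqrtr_ge0.
Qed.

Lemma row_mxB k l (a c : 'rV[R]_k) (b d : 'rV[R]_l) :
  row_mx a b - row_mx c d = row_mx (a - c) (b - d).
Proof. by rewrite opp_row_mx add_row_mx. Qed.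


Lemma rnormal_use k (Om : set 'rV[R]_k) zb v : rnormal Om zb v ->
  forall eps : R, 0 < eps -> exists2 del : R, 0 < del &
   forall z, Om z -> enorm (z - zb) < del -> dotv v (z - zb) <= eps * enorm (z - zb).
Proof.
move=> hv eps e0; have [del d0 hd] := hv eps e0; exists del => // z Oz zd.
have [ep|] := ltP 0 (enorm (z - zb)); first by apply: hd => //; rewrite ep zd.
move/enorm0_eq => ->; by rewrite dotv0r enorm0 mulr0.
Qed.

Lemma near_enorm n (xb : 'rV[R]_n) (P : 'rV[R]_n -> Prop) :
  (\forall x \near xb, P x) -> exists2 r : R, 0 < r & forall x, enorm (x - xb) < r -> P x.
Proof.
move=> /nbhs_normP [e e0 he]; exists e => // x hx; apply: he.
rewrite /ball_ /= distrC; exact: le_lt_trans (mxnorm_le_enorm _) hx.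
Qed.

Lemma diffP' (n m : nat) (f : 'rV[R]_n -> 'rV[R]_m) xb :
  differentiable f xb ->
  forall eps : R, 0 < eps -> exists2 del : R, 0 < del & forall h : 'rV[R]_n,
   `|h| < del -> `|f (h + xb) - f xb - 'd f xb h| <= eps * `|h|.
Proof.
move=> df eps e0.
have /eqaddoP := diff_locally df.
move=> /(_ eps e0) /nbhs_normP [del d0 Hd].
exists del => // h hd.
have := Hd h.
rewrite /ball_ /= sub0r normrN => /(_ hd) /=.
by rewrite /= opprD addrA.
Qed.

Lemma diff_enorm (n m : nat) (f : 'rV[R]_n -> 'rV[R]_m) xb :
  differentiable f xb ->
  forall eps : R, 0 < eps -> exists2 del : R, 0 < del & forall x,
   enorm (x - xb) < del ->
   enorm (f x - f xb - 'd f xb (x - xb)) <= eps * enorm (x - xb).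
Proof.
move=> df eps e0.
have m0 : 0 < m.+1%:R :> R by rewrite ltr0n.
have [del d0 hd] := diffP' df (divr_gt0 e0 m0).
exists del => // x hx.
have := hd (x - xb) (le_lt_trans (mxnorm_le_enorm _) hx); rewrite subrK => h1.
apply: (le_trans (enorm_le_mxnorm _)).
apply: (@le_trans _ _ (m.+1%:R * `|f x - f xb - 'd f xb (x - xb)|)).
  by apply: ler_wpM2r => //; rewrite ler_nat.
apply: (le_trans (ler_wpM2l (ltW m0) h1)).
rewrite mulrA mulrCA divff ?gt_eqF // mulr1.
apply: ler_wpM2l; [exact: ltW | exact: mxnorm_le_enorm].
Qed.

Lemma transp n m (A : {linear 'rV[R]_n -> 'rV[R]_m}) (w : 'rV[R]_m) (h : 'rV[R]_n) :
  dotv (\row_j dotv w (A (delta_mx 0 j))) h = dotv w (A h).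
Proof.
rewrite [in RHS](row_sum_delta h) linear_sum /dotv.
under [RHS]eq_bigr => i _ do rewrite summxE mulr_sumr.
rewrite exchange_big /=; apply: eq_bigr => j _.
rewrite mxE mulr_suml; apply: eq_bigr => i _.
by rewrite linearZ /= mxE mulrCA mulrC.
Qed.

End Aux.

Lemma part1 (R : realType) (n m : nat)
  (f : 'rV[R]_n -> 'rV[R]_m) (F : 'rV[R]_n -> set 'rV[R]_m)
  (xb : 'rV[R]_n) (vb : 'rV[R]_m) (l r : R) : 0 < l -> 0 < r ->
  (forall x, enorm (x - xb) < r -> enorm (f x - f xb) <= l * enorm (x - xb)) ->
  forall w : 'rV[R]_m,
     setsumv (rcoder_fun f xb w) (rcoder F xb (vb - f xb) w)
       `<=` rcoder (fplusF f F) xb vb w.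
Proof.
move=> l0 r0 hr w _ [u1 hu1 [u2 hu2 <-]] eps e0.
set c : R := m.+1%:R.
have c0 : 0 < c by rewrite ltr0n.
set M : R := (1 + c) * (1 + l).
have M0 : 0 < M by apply: mulr_gt0; apply: addr_gt0.
have e'0 : 0 < eps / (2 * M) by apply: divr_gt0 => //; apply: mulr_gt0.
have [d1 d1p h1] := rnormal_use hu1 e'0.
have [d2 d2p h2] := rnormal_use hu2 e'0.
exists (Num.min (Num.min (d1 / M) (d2 / M)) r).
  by rewrite !lt_min !divr_gt0 ?d1p ?d2p ?r0.
move=> z [x [v [[y hy <-] ->]]] /andP[_].
rewrite row_mxB !lt_min => /andP[/andP[hd1 hd2] hrr].
set E := enorm _ in hd1 hd2 hrr *.
have E0 : 0 <= E by exact: enorm_ge0.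
have hdx : enorm (x - xb) <= E by exact: enorm_row_mxl.
have hdv : enorm (f x + y - vb) <= E by exact: enorm_row_mxr.
have hdf : enorm (f x - f xb) <= l * E.
  apply: (le_trans (hr x (le_lt_trans hdx hrr))); by rewrite ler_wpM2l // ltW.
have edy : y - (vb - f xb) = (f x + y - vb) + - (f x - f xb).
  by apply/rowP => i; rewrite !mxE; lra.
have edv : f x + y - vb = (f x - f xb) + (y - (vb - f xb)).
  by apply/rowP => i; rewrite !mxE; lra.
have hM : 1 + l <= M.
  rewrite /M -[X in X <= _]mul1r; apply: ler_wpM2r; first by lra.
  by rewrite lerDl ltW.
have ha1 : enorm (row_mx (x - xb) (f x - f xb)) <= M * E.
  apply: (le_trans (enorm_row_mx_le _ _)).
  have : (1 + l) * E <= M * E by apply: ler_wpM2r.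
  lra.
have ha2 : enorm (row_mx (x - xb) (y - (vb - f xb))) <= M * E.
  apply: (le_trans (enorm_row_mx_le _ _)).
  rewrite edy; apply: (le_trans (lerD (lexx _) (enormD _ _))).
  rewrite enormN -/c.
  have : c * (enorm (f x + y - vb) + enorm (f x - f xb)) <= c * (E + l * E).
    by apply: ler_wpM2l; [exact: ltW | lra].
  rewrite /M. nra.
set e' := eps / (2 * M).
have e'M : e' * M = eps / 2 by rewrite /e'; field; rewrite gt_eqF.
have e'p : 0 <= e' by exact: ltW.
have b1 := h1 (row_mx x (f x)).
rewrite row_mxB in b1.
have {b1} b1 := b1 (ex_intro _ x (ex_intro _ (f x) (conj erefl erefl))).
have /b1 {}b1 : enorm (row_mx (x - xb) (f x - f xb)) < d1.
  apply: (le_lt_trans ha1); by rewrite mulrC -ltr_pdivlMr.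
have b2 := h2 (row_mx x y).
rewrite row_mxB in b2.
have {b2} b2 := b2 (ex_intro _ x (ex_intro _ y (conj hy erefl))).
have /b2 {}b2 : enorm (row_mx (x - xb) (y - (vb - f xb))) < d2.
  apply: (le_lt_trans ha2); by rewrite mulrC -ltr_pdivlMr.
rewrite !dotv_row_mx in b1 b2 *.
rewrite -/e' in b1 b2.
rewrite dotvDl edv [dotv (- w) _]dotvDr.
have c1 := ler_wpM2l e'p ha1.
have c2 := ler_wpM2l e'p ha2.
rewrite -/E.
have -> : eps * E = e' * (M * E) + e' * (M * E).
  by rewrite mulrA e'M; field.
lra.
Qed.

Lemma part2 (R : realType) (n m : nat)
  (f : 'rV[R]_n -> 'rV[R]_m) (F : 'rV[R]_n -> set 'rV[R]_m)
  (xb : 'rV[R]_n) (vb : 'rV[R]_m) (l r : R) : 0 < l -> 0 < r ->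
  (forall x, enorm (x - xb) < r -> enorm (f x - f xb) <= l * enorm (x - xb)) ->
  differentiable f xb ->
  forall w : 'rV[R]_m,
     rcoder (fplusF f F) xb vb w `<=`
     setsumv (rcoder_fun f xb w) (rcoder F xb (vb - f xb) w).
Proof.
move=> l0 r0 hr df w u hu.
set u1 := \row_j dotv w ('d f xb (delta_mx 0 j)).
have hT h : dotv u1 h = dotv w ('d f xb h) by exact: transp.
have Nw0 : 0 <= N1 w by exact: N1_ge0.
have dw a : dotv (- w) a <= N1 w * enorm a.
  by rewrite -(N1N w); exact: dotv_le.
exists u1; last exists (u - u1); last by rewrite addrC subrK.
- move=> eps e0.
  have e2p : 0 < eps / (N1 w + 1) by apply: divr_gt0 => //; lra.
  have [del dp hd] := diff_enorm df e2p.
  exists del => // z [x [y [hy ->]]] /andP[_].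
  rewrite /sv /= in hy; rewrite hy row_mxB => hE.
  set E := enorm _ in hE *.
  have hdx : enorm (x - xb) <= E by exact: enorm_row_mxl.
  have := hd x (le_lt_trans hdx hE).
  rewrite dotv_row_mx hT.
  have -> : dotv w ('d f xb (x - xb)) + dotv (- w) (f x - f xb) =
      dotv (- w) (f x - f xb - 'd f xb (x - xb)).
    by rewrite !dotvNl [dotv w (_ - 'd f xb _)]dotvBr; lra.
  move=> h1.
  have h2 := dw (f x - f xb - 'd f xb (x - xb)).
  have e' : N1 w * (eps / (N1 w + 1)) <= eps.
    rewrite mulrA ler_pdivrMr; last by lra.
    nra.
  set e2 := eps / (N1 w + 1) in h1 e'.
  have e2p' : 0 <= e2 by exact: ltW.
  have E0 : 0 <= enorm (x - xb) by exact: enorm_ge0.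
  nra.
- move=> eps e0.
  set c : R := m.+1%:R.
  have c0 : 0 < c by rewrite ltr0n.
  set M : R := (1 + c) * (1 + l).
  have M0 : 0 < M by apply: mulr_gt0; apply: addr_gt0.
  have e1p : 0 < eps / (2 * M) by apply: divr_gt0 => //; apply: mulr_gt0.
  have e2p : 0 < eps / (2 * (N1 w + 1)) by apply: divr_gt0 => //; lra.
  have [d1 d1p h1] := rnormal_use hu e1p.
  have [d2 d2p h2] := diff_enorm df e2p.
  exists (Num.min (Num.min (d1 / M) d2) r).
    by rewrite !lt_min !divr_gt0 ?d1p ?d2p ?r0.
  move=> z [x [y [hy ->]]] /andP[_].
  rewrite row_mxB !lt_min => /andP[/andP[hd1 hd2] hrr].
  set E := enorm _ in hd1 hd2 hrr *.
  have E0 : 0 <= E by exact: enorm_ge0.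
  have hdx : enorm (x - xb) <= E by exact: enorm_row_mxl.
  have hdy : enorm (y - (vb - f xb)) <= E by exact: enorm_row_mxr.
  have hdf : enorm (f x - f xb) <= l * E.
    apply: (le_trans (hr x (le_lt_trans hdx hrr))); by rewrite ler_wpM2l // ltW.
  have edv : f x + y - vb = (f x - f xb) + (y - (vb - f xb)).
    by apply/rowP => i; rewrite !mxE; lra.
  have hM : 1 + l <= M.
    rewrite /M -[X in X <= _]mul1r; apply: ler_wpM2r; first by lra.
    by rewrite lerDl ltW.
  have ha1 : enorm (row_mx (x - xb) (f x + y - vb)) <= M * E.
    apply: (le_trans (enorm_row_mx_le _ _)).
    rewrite edv; apply: (le_trans (lerD (lexx _) (enormD _ _))).
    rewrite -/c.
    have : c * (enorm (f x - f xb) + enorm (y - (vb - f xb))) <= c * (l * E + E).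
      by apply: ler_wpM2l; [exact: ltW | lra].
    rewrite /M. nra.
  set e1 := eps / (2 * M) in h1.
  have e1M : e1 * M = eps / 2 by rewrite /e1; field; rewrite gt_eqF.
  have e1p' : 0 <= e1 by exact: ltW.
  have b1 := h1 (row_mx x (f x + y)).
  rewrite row_mxB in b1.
  have {b1} b1 := b1 (ex_intro _ x (ex_intro _ (f x + y) (conj (ex_intro2 _ _ y hy erefl) erefl))).
  have /b1 {}b1 : enorm (row_mx (x - xb) (f x + y - vb)) < d1.
    apply: (le_lt_trans ha1); by rewrite mulrC -ltr_pdivlMr.
  have c1 := ler_wpM2l e1p' ha1.
  have b2 := h2 x (le_lt_trans hdx hd2).
  set e2 := eps / (2 * (N1 w + 1)) in b2.
  have e2p' : 0 <= e2 by exact: ltW.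
  have b3 := dw (f x - f xb - 'd f xb (x - xb)).
  have e' : N1 w * e2 <= eps / 2.
    rewrite /e2 mulrA ler_pdivrMr; last by lra.
    have -> : eps / 2 * (2 * (N1 w + 1)) = eps * (N1 w + 1) by field.
    nra.
  have Edx0 : 0 <= enorm (x - xb) by exact: enorm_ge0.
  rewrite !dotv_row_mx in b1 *.
  rewrite dotvDl dotvNl hT.
  have ey : y - (vb - f xb) = (f x + y - vb) - (f x - f xb - 'd f xb (x - xb)) - 'd f xb (x - xb).
    by apply/rowP => i; rewrite !mxE; lra.
  rewrite ey (dotvBr (f x + y - vb - (f x - f xb - 'd f xb (x - xb))) ('d f xb (x - xb)) (- w)).
  rewrite (dotvBr (f x + y - vb) (f x - f xb - 'd f xb (x - xb)) (- w)) (dotvNl w ('d f xb (x - xb))).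
  have hh : dotv (- w) (f x - f xb - 'd f xb (x - xb)) >= - (N1 w * enorm (f x - f xb - 'd f xb (x - xb))).
    have := dw (- (f x - f xb - 'd f xb (x - xb))).
    rewrite dotvNr enormN. lra.
  have : N1 w * enorm (f x - f xb - 'd f xb (x - xb)) <= N1 w * (e2 * enorm (x - xb)).
    by apply: ler_wpM2l.
  have : N1 w * e2 * enorm (x - xb) <= eps / 2 * E.
    apply: (le_trans (ler_wpM2l (mulr_ge0 Nw0 e2p') hdx)).
    by apply: ler_wpM2r.
  have -> : eps * E = e1 * (M * E) + eps / 2 * E by rewrite mulrA e1M; field.
  rewrite -/e1 in b1.
  nra.
Qed.

Theorem lemma6p2 (R : realType) (n m : nat)
  (f : 'rV[R]_n -> 'rV[R]_m) (F : 'rV[R]_n -> set 'rV[R]_m)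
  (xb : 'rV[R]_n) (vb : 'rV[R]_m) :
  fplusF f F xb vb ->
  (exists2 l : R, 0 < l &
     \forall x \near xb, enorm (f x - f xb) <= l * enorm (x - xb)) ->
  (forall w : 'rV[R]_m,
     setsumv (rcoder_fun f xb w) (rcoder F xb (vb - f xb) w)
       `<=` rcoder (fplusF f F) xb vb w) /\
  (differentiable f xb ->
   forall w : 'rV[R]_m,
     setsumv (rcoder_fun f xb w) (rcoder F xb (vb - f xb) w)
       = rcoder (fplusF f F) xb vb w).
Proof.
move=> _ [l l0 hcalm].
have [r r0 hr] := near_enorm hcalm.
split; first by move=> w; exact: (part1 l0 r0 hr).
move=> df w; apply/seteqP; split.
  exact: (part1 l0 r0 hr).
exact: (part2 l0 r0 hr df).
Qed.
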